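(* Let $a,b\in\mathbb R$ and $s,t\in\mathbb N$. The system $\ddot x_1=a\,\dot x_1^{2-t}\dot x_2^{t}$, $\ddot x_2=b\,\dot x_1^{2-s}\dot x_2^{s}$ on $\mathbb R^2$ (spray $S=y_1\frac{\partial}{\partial x_1}+y_2\frac{\partial}{\partial x_2}+a y_1^{2-t}y_2^t\frac{\partial}{\partial y_1}+b y_1^{2-s}y_2^s\frac{\partial}{\partial y_2}$, considered where defined, e.g. on $y_1\ne0$, $y_2\neq 0$) cannot be the geodesic system of a non-Berwald Landsberg metric: there is no open set $U$ on which the Berwald curvature $\mathcal R$ of $S$ is not identically zero together with a function $E:U\to\mathbb R$ satisfying (H), (EL), (Ls) with $(g_{ij})$ positive definite.
   Context: Coordinates $(x^1,x^2,y^1,y^2)=(x_1,x_2,y_1,y_2)$ on $T\mathbb R^2$. For a spray $S=y^i\frac{\partial}{\partial x^i}+f^i\frac{\partial}{\partial y^i}$: $\Gamma^i_j=-\frac12\frac{\partial f^i}{\partial y^j}$, $\Gamma^i_{jk}=\frac{\partial\Gamma^i_j}{\partial y^k}$; Berwald curvature $\mathcal R=-\frac12\frac{\partial^3f^l}{\partial y^i\partial y^j\partial y^k}dx^i\otimes dx^j\otimes dx^k\otimes\frac{\partial}{\partial y^l}$ (a Landsberg metric is of Berwald type iff $\mathcal R=0$). For $E$ smooth, $g_{ij}=\frac{\partial^2E}{\partial y^i\partial y^j}$; (H) $y^i\frac{\partial E}{\partial y^i}-2E=0$; (EL) $y^j\frac{\partial^2E}{\partial x^j\partial y^i}+f^j\frac{\partial^2E}{\partial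 y^j\partial y^i}-\frac{\partial E}{\partial x^i}=0$; (Ls) $\frac{\partial g_{jk}}{\partial x^i}-\Gamma^l_i\frac{\partial g_{jk}}{\partial y^l}-\Gamma^l_{ik}g_{lj}-\Gamma^l_{ij}g_{lk}=0$. *)

(* Defs.v *)
From Stdlib Require Import Reals ZArith.
From Coquelicot Require Import Coquelicot.
Open Scope R_scope.

(* Points of T R^2 = R^4 with coordinates (x1, x2, y1, y2). *)
Record pt := Pt { px1 : R; px2 : R; py1 : R; py2 : R }.

Inductive coord := X1 | X2 | Y1 | Y2.

Definition get (c : coord) (p : pt) : R :=
  match c with X1 => px1 p | X2 => px2 p | Y1 => py1 p | Y2 => py2 p end.

Definition setc (c : coord) (p : pt) (r : R) : pt :=
  match c with
  | X1 => Pt r (px2 p) (py1 p) (py2 p)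
  | X2 => Pt (px1 p) r (py1 p) (py2 p)
  | Y1 => Pt (px1 p) (px2 p) r (py2 p)
  | Y2 => Pt (px1 p) (px2 p) (py1 p) r
  end.

Definition pd (c : coord) (F : pt -> R) : pt -> R :=
  fun p => Derive (fun r => F (setc c p r)) (get c p).

Definition pd_list (l : list coord) (F : pt -> R) : pt -> R :=
  List.fold_right pd F l.

Definition dist4 (p q : pt) : R :=
  Rmax (Rmax (Rabs (px1 p - px1 q)) (Rabs (px2 p - px2 q)))
       (Rmax (Rabs (py1 p - py1 q)) (Rabs (py2 p - py2 q))).

Definition open4 (U : pt -> Prop) : Prop :=
  forall p, U p -> exists eps, 0 < eps /\ forall q, dist4 p q < eps -> U q.

Definition cont4_at (F : pt -> R) (p : pt) : Prop :=
  forall eps, 0 < eps -> exists del, 0 < del /\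
    forall q, dist4 p q < del -> Rabs (F q - F p) < eps.

Definition smooth_on (U : pt -> Prop) (F : pt -> R) : Prop :=
  forall (l : list coord) (p : pt), U p ->
    cont4_at (pd_list l F) p /\
    (forall c, ex_derive (fun r => pd_list l F (setc c p r)) (get c p)).

Inductive ix := I1 | I2.
Definition xc (i : ix) : coord := match i with I1 => X1 | I2 => X2 end.
Definition yc (i : ix) : coord := match i with I1 => Y1 | I2 => Y2 end.
Definition yv (i : ix) (p : pt) : R := get (yc i) p.
Definition sum2 (f : ix -> R) : R := f I1 + f I2.

Definition fS (a b : R) (s t : nat) (i : ix) : pt -> R :=
  match i with
  | I1 => fun p => a * powerRZ (py1 p) (2 - Z.of_nat t)%Z * (py2 p) ^ t
  | I2 => fun p => b * powerRZ (py1 p) (2 - Z.of_nat s)%Z * (py2 p) ^ s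
  end.

(* domain where the spray is defined: y1 <> 0 whenever a negative
   exponent of y1 occurs *)
Definition spray_domain (s t : nat) (p : pt) : Prop :=
  ((2 < t)%nat \/ (2 < s)%nat) -> py1 p <> 0.

Definition Gam1 (a b : R) (s t : nat) (i j : ix) : pt -> R :=
  fun p => - / 2 * pd (yc j) (fS a b s t i) p.
Definition Gam2 (a b : R) (s t : nat) (i j k : ix) : pt -> R :=
  pd (yc k) (Gam1 a b s t i j).

Definition berwald (a b : R) (s t : nat) (l i j k : ix) : pt -> R :=
  fun p => - / 2 * pd (yc i) (pd (yc j) (pd (yc k) (fS a b s t l))) p.

Definition gmet (E : pt -> R) (j k : ix) : pt -> R :=
  pd (yc j) (pd (yc k) E).

Definition condH (E : pt -> R) (p : pt) : Prop :=
  sum2 (fun i => yv i p * pd (yc i) E p) - 2 * E p = 0.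

Definition condEL (a b : R) (s t : nat) (E : pt -> R) (p : pt) : Prop :=
  forall i : ix,
    sum2 (fun j => yv j p * pd (xc j) (pd (yc i) E) p)
    + sum2 (fun j => fS a b s t j p * pd (yc j) (pd (yc i) E) p)
    - pd (xc i) E p = 0.

Definition condLs (a b : R) (s t : nat) (E : pt -> R) (p : pt) : Prop :=
  forall i j k : ix,
    pd (xc i) (gmet E j k) p
    - sum2 (fun l => Gam1 a b s t l i p * pd (yc l) (gmet E j k) p)
    - sum2 (fun l => Gam2 a b s t l i k p * gmet E l j p)
    - sum2 (fun l => Gam2 a b s t l i j p * gmet E l k p) = 0.

Definition posdef (E : pt -> R) (p : pt) : Prop :=
  forall v : ix -> R, (v I1 <> 0 \/ v I2 <> 0) ->
    0 < sum2 (fun j => sum2 (fun k => gmet E j k p * v j * v k)).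

(* Main.v *)
Require Import Defs.
From Stdlib Require Import Reals ZArith Lia Lra Psatz FunctionalExtensionality.
From Coquelicot Require Import Coquelicot.
Open Scope R_scope.

Lemma get_setc c p r : get c (setc c p r) = r.
Proof. destruct c; reflexivity. Qed.
Lemma setc_get c p : setc c p (get c p) = p.
Proof. destruct c, p; reflexivity. Qed.
Lemma setc_setc c p r r' : setc c (setc c p r) r' = setc c p r'.
Proof. destruct c; reflexivity. Qed.
Lemma setc_comm c1 c2 p r1 r2 : c1 <> c2 ->
  setc c1 (setc c2 p r2) r1 = setc c2 (setc c1 p r1) r2.
Proof. destruct c1, c2; intros H; try reflexivity; now exfalso. Qed.
Lemma get_setc_other c c' p r : c <> c' -> get c' (setc c p r) = get c' p.
Proof. destruct c, c'; intros H; try reflexivity; now exfalso. Qed.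

Lemma is_derive_idR (x : R) : is_derive (fun r : R => r) x 1.
Proof. auto_derive; auto. Qed.
Lemma is_derive_constR (a x : R) : is_derive (fun _ : R => a) x 0.
Proof. auto_derive; auto. Qed.

Lemma is_derive_powerRZ (n : Z) (x : R) : (0 <= n)%Z \/ x <> 0 ->
  is_derive (fun r => powerRZ r n) x (IZR n * powerRZ x (n - 1)).
Proof.
  intros H. destruct n as [|pn|pn].
  - replace (IZR 0 * powerRZ x (0-1)) with 0 by (simpl; ring).
    apply (is_derive_ext (fun _ => 1)). { intros; reflexivity. } auto_derive; auto; ring.
  - simpl (fun r => powerRZ r (Z.pos pn)).
    assert (HN : (1 <= Pos.to_nat pn)%nat) by lia.
    replace (Z.pos pn - 1)%Z with (Z.of_nat (Init.Nat.pred (Pos.to_nat pn))) by lia.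
    rewrite <- pow_powerRZ.
    replace (IZR (Z.pos pn)) with (INR (Pos.to_nat pn) * 1).
    2:{ rewrite INR_IZR_INZ, positive_nat_Z. ring. }
    apply is_derive_pow. apply is_derive_idR.
  - destruct H as [H|H]; [lia|].
    simpl (fun r => powerRZ r (Z.neg pn)).
    replace (Z.neg pn - 1)%Z with (Z.neg (pn + 1)) by lia. simpl powerRZ.
    assert (E : is_derive (fun r => r ^ Pos.to_nat pn) x (INR (Pos.to_nat pn) * 1 * x ^ Init.Nat.pred (Pos.to_nat pn))).
    { apply is_derive_pow. apply is_derive_idR. }
    eapply is_derive_ext. { intros r. reflexivity. }
    assert (Hx : x ^ Pos.to_nat pn <> 0) by (apply pow_nonzero; auto).
    eapply (is_derive_ext (fun y => / (y ^ Pos.to_nat pn))). { intros; reflexivity. }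
    replace (IZR (Z.neg pn) * / x ^ Pos.to_nat (pn + 1))
      with (- (INR (Pos.to_nat pn) * 1 * x ^ Init.Nat.pred (Pos.to_nat pn)) / (x ^ Pos.to_nat pn) ^ 2).
    + apply is_derive_inv; auto.
    + rewrite Pos2Nat.inj_add. assert (HN : (1 <= Pos.to_nat pn)%nat) by lia.
      destruct (Pos.to_nat pn) as [|N] eqn:EN; [lia|].
      simpl Init.Nat.pred. rewrite <- Pos2Z.opp_pos, opp_IZR, INR_IZR_INZ.
      replace (Z.of_nat (S N)) with (Z.pos pn) by lia.
      replace (S N + Pos.to_nat 1)%nat with (S (S N)) by (simpl; lia).
      simpl. simpl in Hx. field. split; intro Hz; apply Hx; rewrite Hz; ring.
Qed.
Lemma locR (x : R) (P : R -> Prop) (e : R) : 0 < e ->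
  (forall y, Rabs (y - x) < e -> P y) -> locally x P.
Proof. intros He H. exists (mkposreal e He). intros y Hy. apply H. exact Hy. Qed.

Record mon := Mon { ma : R; mn : Z; mk : Z }.
Definition mono (x : mon) (p : pt) : R :=
  ma x * powerRZ (py1 p) (mn x) * powerRZ (py2 p) (mk x).
Definition dm (c : coord) (x : mon) : mon :=
  match c with
  | X1 | X2 => Mon 0 (mn x) (mk x)
  | Y1 => Mon (ma x * IZR (mn x)) (mn x - 1) (mk x)
  | Y2 => Mon (ma x * IZR (mk x)) (mn x) (mk x - 1)
  end.
Definition dml (l : list coord) (x : mon) : mon := List.fold_right dm x l.
Definition okp (x : mon) (p : pt) : Prop :=
  ma x = 0 \/ (((0 <= mn x)%Z \/ py1 p <> 0) /\ ((0 <= mk x)%Z \/ py2 p <> 0)).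

Lemma is_derive_mono c x p : okp x p ->
  is_derive (fun r => mono x (setc c p r)) (get c p) (mono (dm c x) p).
Proof.
  intros Hok. destruct x as [al n k]. unfold mono; simpl.
  destruct (Req_dec al 0) as [H0|H0].
  { subst. destruct c; simpl;
    (apply (is_derive_ext (fun _ => 0)); [intros; now rewrite !Rmult_0_l|]);
    match goal with |- is_derive _ _ ?v => replace v with 0 by ring end; apply is_derive_constR. }
  destruct Hok as [Hok|[H1 H2]]; [simpl in Hok; contradiction|]. simpl in H1, H2.
  destruct c; simpl.
  - rewrite Rmult_0_l, Rmult_0_l. apply is_derive_constR.
  - rewrite Rmult_0_l, Rmult_0_l. apply is_derive_constR.
  - apply (is_derive_ext (fun r => (al * powerRZ (py2 p) k) * powerRZ r n)).
    { intros; simpl; ring. }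
    replace (al * IZR n * powerRZ (py1 p) (n - 1) * powerRZ (py2 p) k)
      with ((al * powerRZ (py2 p) k) * (IZR n * powerRZ (py1 p) (n - 1))) by ring.
    apply is_derive_scal. apply is_derive_powerRZ. exact H1.
  - apply (is_derive_ext (fun r => (al * powerRZ (py1 p) n) * powerRZ r k)).
    { intros; simpl; ring. }
    replace (al * IZR k * powerRZ (py1 p) n * powerRZ (py2 p) (k - 1))
      with ((al * powerRZ (py1 p) n) * (IZR k * powerRZ (py2 p) (k - 1))) by ring.
    apply is_derive_scal. apply is_derive_powerRZ. exact H2.
Qed.

Lemma okp_dm c x p : okp x p -> okp (dm c x) p.
Proof.
  destruct x as [al n k]; unfold okp; simpl. intros [H|[H1 H2]].
  - left. destruct c; simpl; subst; ring.
  - destruct c; simpl; try (left; reflexivity).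
    + destruct (Z.eq_dec n 0) as [e|e]; [left; subst; simpl; ring|].
      right; split; auto. destruct H1; [left; lia| right; auto].
    + destruct (Z.eq_dec k 0) as [e|e]; [left; subst; simpl; ring|].
      right; split; auto. destruct H2; [left; lia| right; auto].
Qed.

Lemma okp_dml l x p : okp x p -> okp (dml l x) p.
Proof. induction l; simpl; auto. intros H. apply okp_dm. auto. Qed.

Lemma loc_py1 c p : py1 p <> 0 -> locally (get c p) (fun r => py1 (setc c p r) <> 0).
Proof.
  intros H. destruct c; try (apply filter_forall; intros; simpl; exact H).
  apply (locR _ _ (Rabs (py1 p))). { apply Rabs_pos_lt; auto. }
  intros y Hy. simpl. simpl in Hy. intros E. subst. rewrite Rminus_0_l, Rabs_Ropp in Hy. lra.
Qed.
Lemma loc_py2 c p : py2 p <> 0 -> locally (get c p) (fun r => py2 (setc c p r) <> 0).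
Proof.
  intros H. destruct c; try (apply filter_forall; intros; simpl; exact H).
  apply (locR _ _ (Rabs (py2 p))). { apply Rabs_pos_lt; auto. }
  intros y Hy. simpl. simpl in Hy. intros E. subst. rewrite Rminus_0_l, Rabs_Ropp in Hy. lra.
Qed.

Lemma okp_loc c x p : okp x p -> locally (get c p) (fun r => okp x (setc c p r)).
Proof.
  unfold okp. intros [H|[H1 H2]].
  - apply filter_forall. intros; left; auto.
  - eapply filter_imp; [|apply filter_and].
    + intros r Hr. right. exact Hr.
    + destruct H1 as [H1|H1]. apply filter_forall; intros; left; auto.
      eapply filter_imp; [|apply (loc_py1 c p H1)]. intros; right; auto.
    + destruct H2 as [H2|H2]. apply filter_forall; intros; left; auto.
      eapply filter_imp; [|apply (loc_py2 c p H2)]. intros; right; auto.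
Qed.

Lemma pd_list_mono l x p : okp x p -> pd_list l (mono x) p = mono (dml l x) p.
Proof.
  revert p. induction l as [|c l IH]; intros p Hp; simpl; auto.
  unfold pd. rewrite (Derive_ext_loc _ (fun r => mono (dml l x) (setc c p r))).
  - apply is_derive_unique. apply is_derive_mono. apply okp_dml; auto.
  - eapply filter_imp; [|apply (okp_loc c x p Hp)]. intros r Hr. apply IH; auto.
Qed.

Lemma exd_list_mono l c x p : okp x p ->
  ex_derive (fun r => pd_list l (mono x) (setc c p r)) (get c p).
Proof.
  intros Hp. apply (ex_derive_ext_loc (fun r => mono (dml l x) (setc c p r))).
  - eapply filter_imp; [|apply (okp_loc c x p Hp)]. intros r Hr. symmetry. apply pd_list_mono; auto.
  - eexists. apply is_derive_mono. apply okp_dml; auto.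
Qed.

Definition exd (c : coord) (F : pt -> R) (p : pt) : Prop :=
  ex_derive (fun r => F (setc c p r)) (get c p).

Lemma exd_plus c F G p : exd c F p -> exd c G p -> exd c (fun q => F q + G q) p.
Proof. intros H1 H2. unfold exd in *. exact (ex_derive_plus _ _ _ H1 H2). Qed.
Lemma exd_minus c F G p : exd c F p -> exd c G p -> exd c (fun q => F q - G q) p.
Proof. intros H1 H2. unfold exd in *. exact (ex_derive_minus _ _ _ H1 H2). Qed.
Lemma exd_mult c F G p : exd c F p -> exd c G p -> exd c (fun q => F q * G q) p.
Proof. intros H1 H2. unfold exd in *. exact (ex_derive_mult _ _ _ H1 H2). Qed.
Lemma exd_scal c k F p : exd c F p -> exd c (fun q => k * F q) p.
Proof. intros H1. unfold exd in *. exact (ex_derive_scal _ _ _ H1). Qed.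
Lemma exd_yv c j p : exd c (yv j) p.
Proof.
  unfold exd, yv. destruct c, j; simpl;
  eexists; first [exact (is_derive_idR _) | exact (is_derive_constR _ _)].
Qed.

Lemma pd_plus c F G p : exd c F p -> exd c G p -> pd c (fun q => F q + G q) p = pd c F p + pd c G p.
Proof. intros H1 H2. unfold pd. exact (Derive_plus _ _ _ H1 H2). Qed.
Lemma pd_minus c F G p : exd c F p -> exd c G p -> pd c (fun q => F q - G q) p = pd c F p - pd c G p.
Proof. intros H1 H2. unfold pd. exact (Derive_minus _ _ _ H1 H2). Qed.
Lemma pd_mult c F G p : exd c F p -> exd c G p ->
  pd c (fun q => F q * G q) p = pd c F p * G p + F p * pd c G p.
Proof. intros H1 H2. unfold pd. rewrite Derive_mult; auto. rewrite setc_get. reflexivity. Qed.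
Lemma pd_scal c k F p : pd c (fun q => k * F q) p = k * pd c F p.
Proof. unfold pd. apply Derive_scal. Qed.
Lemma pd_yv_same j p : pd (yc j) (yv j) p = 1.
Proof. unfold pd, yv. destruct j; simpl; apply is_derive_unique; apply is_derive_idR. Qed.
Lemma pd_yv_diff j k p : j <> k -> pd (yc j) (yv k) p = 0.
Proof. intros H. unfold pd, yv. destruct j, k; try (now exfalso); simpl; apply Derive_const. Qed.
Lemma pd_x_yv i k p : pd (xc i) (yv k) p = 0.
Proof. unfold pd, yv. destruct i, k; simpl; apply Derive_const. Qed.

Lemma dist4_lt p q e :
  Rabs (px1 p - px1 q) < e -> Rabs (px2 p - px2 q) < e ->
  Rabs (py1 p - py1 q) < e -> Rabs (py2 p - py2 q) < e -> dist4 p q < e.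
Proof. intros. unfold dist4. repeat apply Rmax_lub_lt; auto. Qed.

Lemma dist4_setc2 c1 c2 p r1 r2 e : 0 < e ->
  Rabs (get c1 p - r1) < e -> Rabs (get c2 p - r2) < e ->
  dist4 p (setc c1 (setc c2 p r2) r1) < e.
Proof.
  intros He H1 H2. assert (H0 : Rabs 0 < e) by (rewrite Rabs_R0; auto).
  destruct c1, c2; apply dist4_lt; simpl in *; rewrite ?Rminus_diag; auto.
Qed.

Lemma open_loc U c p : open4 U -> U p -> locally (get c p) (fun r => U (setc c p r)).
Proof.
  intros HU Hp. destruct (HU p Hp) as [e [He H]].
  apply (locR _ _ e He). intros y Hy. apply H.
  rewrite <- (setc_setc c p y y). apply dist4_setc2; auto;
  rewrite Rabs_minus_sym; auto.
Qed.

Lemma pd_ext_U U c F G p : open4 U -> U p -> (forall q, U q -> F q = G q) -> pd c F p = pd c G p.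
Proof.
  intros HU Hp H. unfold pd. apply Derive_ext_loc.
  eapply filter_imp; [|apply (open_loc U c p HU Hp)]. intros r Hr. apply H; auto.
Qed.

Lemma pd_zero_U U c F p : open4 U -> U p -> (forall q, U q -> F q = 0) -> pd c F p = 0.
Proof.
  intros HU Hp H. rewrite (pd_ext_U U c F (fun _ => 0) p HU Hp H).
  unfold pd. apply Derive_const.
Qed.
Lemma smooth_exd U E l c p : smooth_on U E -> U p -> exd c (pd_list l E) p.
Proof. intros H Hp. apply (proj2 (H l p Hp)). Qed.

Lemma pd_swap U E l c1 c2 p : open4 U -> smooth_on U E -> U p -> c1 <> c2 ->
  pd c1 (pd c2 (pd_list l E)) p = pd c2 (pd c1 (pd_list l E)) p.
Proof.
  intros HU HE Hp Hc. set (G := pd_list l E).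
  set (f := fun z w => G (setc c1 (setc c2 p w) z)).
  assert (Hc' : c2 <> c1) by auto.
  assert (Hin : forall z w, Derive (fun t => f z t) w = pd c2 G (setc c1 (setc c2 p w) z)).
  { intros z w. unfold pd, f. rewrite get_setc_other by auto. rewrite get_setc.
    apply Derive_ext. intros t. f_equal.
    rewrite (setc_comm c1 c2 p z w) by auto. rewrite setc_setc.
    rewrite setc_comm by auto. reflexivity. }
  assert (Hin2 : forall z w, Derive (fun t => f t w) z = pd c1 G (setc c1 (setc c2 p w) z)).
  { intros z w. unfold pd, f. rewrite get_setc.
    apply Derive_ext. intros t. rewrite setc_setc. reflexivity. }
  assert (Hout1 : forall z w, Derive (fun z0 => Derive (fun t => f z0 t) w) z
                   = pd c1 (pd c2 G) (setc c1 (setc c2 p w) z)).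
  { intros z w. rewrite (Derive_ext _ (fun z0 => pd c2 G (setc c1 (setc c2 p w) z0))) by (intros; apply Hin).
    symmetry. unfold pd at 1. rewrite get_setc. apply Derive_ext. intros t. rewrite setc_setc. reflexivity. }
  assert (Hout2 : forall z w, Derive (fun w0 => Derive (fun t => f t w0) z) w
                   = pd c2 (pd c1 G) (setc c1 (setc c2 p w) z)).
  { intros z w. rewrite (Derive_ext _ (fun w0 => pd c1 G (setc c1 (setc c2 p w0) z))) by (intros; apply Hin2).
    symmetry. unfold pd at 1. rewrite get_setc_other by auto. rewrite get_setc. apply Derive_ext. intros t.
    rewrite (setc_comm c1 c2 p z w) by auto. rewrite setc_setc.
    rewrite setc_comm by auto. reflexivity. }
  assert (Hpt : setc c1 (setc c2 p (get c2 p)) (get c1 p) = p) by (rewrite !setc_get; reflexivity).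
  destruct (HU p Hp) as [e [He HUe]].
  assert (Hnear : forall u v, Rabs (u - get c1 p) < e -> Rabs (v - get c2 p) < e ->
             U (setc c1 (setc c2 p v) u)).
  { intros u v H1 H2. apply HUe. apply dist4_setc2; auto; rewrite Rabs_minus_sym; auto. }
  pose proof (Schwarz f (get c1 p) (get c2 p)) as HS.
  rewrite Hout1, Hout2, Hpt in HS. apply HS; clear HS.
  - exists (mkposreal e He). intros u v H1 H2. simpl in H1, H2.
    pose proof (Hnear u v H1 H2) as Hq. set (q := setc c1 (setc c2 p v) u) in *.
    repeat split.
    + pose proof (smooth_exd U E l c1 q HE Hq) as X. unfold exd in X. unfold q in X.
      rewrite get_setc in X. unfold f. eapply ex_derive_ext; [|exact X]. intros t. simpl.
      rewrite setc_setc. reflexivity.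
    + pose proof (smooth_exd U E l c2 q HE Hq) as X. unfold exd in X. unfold q in X.
      rewrite get_setc_other, get_setc in X by auto. unfold f. eapply ex_derive_ext; [|exact X].
      intros t. simpl. f_equal. rewrite (setc_comm c1 c2 p u v) by auto. rewrite setc_setc.
      rewrite setc_comm by auto. reflexivity.
    + pose proof (smooth_exd U E (cons c2 l) c1 q HE Hq) as X. unfold exd in X. unfold q in X.
      rewrite get_setc in X. eapply ex_derive_ext; [|exact X]. intros t. simpl.
      rewrite setc_setc, Hin. reflexivity.
    + pose proof (smooth_exd U E (cons c1 l) c2 q HE Hq) as X. unfold exd in X. unfold q in X.
      rewrite get_setc_other, get_setc in X by auto. eapply ex_derive_ext; [|exact X].
      intros t. simpl. rewrite Hin2. f_equal.
      rewrite (setc_comm c1 c2 p u v) by auto. rewrite setc_setc.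
      rewrite setc_comm by auto. reflexivity.
  - intros eps. destruct (proj1 (HE (cons c1 (cons c2 l)) p Hp) eps (cond_pos eps)) as [d [Hd Hc2]].
    exists (mkposreal (Rmin d e) (Rmin_pos _ _ Hd He)). intros u v H1 H2. simpl in H1, H2.
    rewrite !Hout1, Hpt.
    apply Hc2. apply dist4_setc2; [lra| |]; rewrite Rabs_minus_sym;
      eapply Rlt_le_trans; eauto; apply Rmin_l.
  - intros eps. destruct (proj1 (HE (cons c2 (cons c1 l)) p Hp) eps (cond_pos eps)) as [d [Hd Hc2]].
    exists (mkposreal (Rmin d e) (Rmin_pos _ _ Hd He)). intros u v H1 H2. simpl in H1, H2.
    rewrite !Hout2, Hpt.
    apply Hc2. apply dist4_setc2; [lra| |]; rewrite Rabs_minus_sym;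
      eapply Rlt_le_trans; eauto; apply Rmin_l.
Qed.
Definition fm (a b : R) (s t : nat) (l : ix) : mon :=
  match l with
  | I1 => Mon a (2 - Z.of_nat t) (Z.of_nat t)
  | I2 => Mon b (2 - Z.of_nat s) (Z.of_nat s)
  end.

Lemma fS_mono a b s t l : fS a b s t l = mono (fm a b s t l).
Proof.
  apply functional_extensionality. intros p. destruct l; unfold fS, mono; simpl;
  rewrite pow_powerRZ; ring.
Qed.

Definition Hyp (a b : R) (s t : nat) (U : pt -> Prop) (E : pt -> R) : Prop :=
  open4 U /\ (forall p, U p -> spray_domain s t p) /\ smooth_on U E /\
  (forall p, U p -> condH E p /\ condEL a b s t E p /\ condLs a b s t E p /\ posdef E p).

Lemma okU a b s t U E l q : Hyp a b s t U E -> U q -> okp (fm a b s t l) q.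
Proof.
  intros [HU [Hd _]] Hq. unfold okp, fm. destruct l; cbn [ma mn mk]; right; (split; [|left; lia]).
  - destruct (le_lt_dec t 2). left; lia. right. apply Hd; auto; left; lia.
  - destruct (le_lt_dec s 2). left; lia. right. apply Hd; auto; right; lia.
Qed.

Lemma Gam1_fun a b s t m i :
  Gam1 a b s t m i = fun q => -/2 * pd_list (cons (yc i) nil) (mono (fm a b s t m)) q.
Proof. unfold Gam1. rewrite fS_mono. reflexivity. Qed.

Lemma Gam2_fun a b s t m i k :
  Gam2 a b s t m i k = fun q => -/2 * pd_list (cons (yc k) (cons (yc i) nil)) (mono (fm a b s t m)) q.
Proof.
  apply functional_extensionality. intros q. unfold Gam2. rewrite Gam1_fun. apply pd_scal.
Qed.

Lemma Gam1_val a b s t U E m i q : Hyp a b s t U E -> U q ->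
  Gam1 a b s t m i q = -/2 * mono (dm (yc i) (fm a b s t m)) q.
Proof. intros H Hq. rewrite Gam1_fun. rewrite pd_list_mono; [reflexivity|]. eapply okU; eauto. Qed.

Lemma Gam2_val a b s t U E m i k q : Hyp a b s t U E -> U q ->
  Gam2 a b s t m i k q = -/2 * mono (dm (yc k) (dm (yc i) (fm a b s t m))) q.
Proof. intros H Hq. rewrite Gam2_fun. rewrite pd_list_mono; [reflexivity|]. eapply okU; eauto. Qed.

Lemma exd_E0 U E c p : smooth_on U E -> U p -> exd c E p.
Proof. intros. apply (smooth_exd U E nil); auto. Qed.
Lemma exd_E1 U E c c1 p : smooth_on U E -> U p -> exd c (pd c1 E) p.
Proof. intros. apply (smooth_exd U E (cons c1 nil)); auto. Qed.
Lemma exd_E2 U E c c1 c2 p : smooth_on U E -> U p -> exd c (pd c1 (pd c2 E)) p.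
Proof. intros. apply (smooth_exd U E (cons c1 (cons c2 nil))); auto. Qed.

Lemma gsym a b s t U E j k q : Hyp a b s t U E -> U q -> gmet E j k q = gmet E k j q.
Proof.
  intros [HU [_ [HE _]]] Hq. unfold gmet.
  destruct j, k; try reflexivity;
  apply (pd_swap U E nil); auto; discriminate.
Qed.

Lemma pd_lin2 c F1 G1 F2 G2 H K p :
  exd c F1 p -> exd c G1 p -> exd c F2 p -> exd c G2 p -> exd c H p ->
  pd c (fun q => F1 q * G1 q + F2 q * G2 q - K * H q) p =
  (pd c F1 p * G1 p + F1 p * pd c G1 p) + (pd c F2 p * G2 p + F2 p * pd c G2 p) - K * pd c H p.
Proof.
  intros e1 e2 e3 e4 e5.
  rewrite (pd_minus c (fun q => F1 q * G1 q + F2 q * G2 q) (fun q => K * H q)).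
  - rewrite pd_scal, (pd_plus c (fun q => F1 q * G1 q) (fun q => F2 q * G2 q)).
    + rewrite (pd_mult c F1 G1), (pd_mult c F2 G2); auto.
    + apply exd_mult; auto.
    + apply exd_mult; auto.
  - apply (exd_plus c (fun q => F1 q * G1 q) (fun q => F2 q * G2 q)); apply exd_mult; auto.
  - apply exd_scal; auto.
Qed.

Lemma H1 a b s t U E k q : Hyp a b s t U E -> U q ->
  sum2 (fun j => yv j q * gmet E j k q) = pd (yc k) E q.
Proof.
  intros HH Hq. pose proof HH as [HU [_ [HE HC]]].
  assert (Z : pd (yc k) (fun p => yv I1 p * pd (yc I1) E p + yv I2 p * pd (yc I2) E p - 2 * E p) q = 0).
  { apply (pd_zero_U U); auto. intros p Hp. apply (HC p Hp). }
  rewrite pd_lin2 in Z; [| apply exd_yv | apply (exd_E1 U E); auto | apply exd_yv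
     | apply (exd_E1 U E); auto | apply (exd_E0 U E); auto].
  unfold sum2. rewrite !(gsym a b s t U E _ k q HH Hq). unfold gmet.
  destruct k.
  - rewrite pd_yv_same, (pd_yv_diff I1 I2) in Z by discriminate. unfold yv in *. lra.
  - rewrite pd_yv_same, (pd_yv_diff I2 I1) in Z by discriminate. unfold yv in *. lra.
Qed.
Lemma pz_shift (u : R) (n : Z) : (0 <= n)%Z \/ u <> 0 ->
  IZR n * (u * powerRZ u (n - 1)) = IZR n * powerRZ u n.
Proof.
  intros H. destruct (Z.eq_dec n 0) as [e|e]; [subst; simpl; ring|].
  destruct (Req_dec u 0) as [Hu|Hu].
  - destruct H as [H|H]; [|contradiction].
    replace n with (Z.of_nat (S (Z.to_nat (n - 1)))) by lia.
    replace (Z.of_nat (S (Z.to_nat (n - 1))) - 1)%Z with (Z.of_nat (Z.to_nat (n - 1))) by lia.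
    rewrite <- !pow_powerRZ. simpl. ring.
  - replace (powerRZ u n) with (powerRZ u ((n - 1) + 1)) by (f_equal; lia).
    rewrite powerRZ_add by auto. simpl. ring.
Qed.

Lemma mono_euler x q : okp x q ->
  py1 q * mono (dm Y1 x) q + py2 q * mono (dm Y2 x) q = (IZR (mn x) + IZR (mk x)) * mono x q.
Proof.
  destruct x as [al n k]. unfold okp, mono; simpl. intros [H|[H1 H2]].
  - subst. ring.
  - transitivity (al * powerRZ (py2 q) k * (IZR n * (py1 q * powerRZ (py1 q) (n - 1)))
                + al * powerRZ (py1 q) n * (IZR k * (py2 q * powerRZ (py2 q) (k - 1)))); [ring|].
    rewrite !pz_shift by auto. ring.
Qed.

Lemma Ha a b s t U E i k q : Hyp a b s t U E -> U q ->
  yv I1 q * pd (xc i) (gmet E I1 k) q + yv I2 q * pd (xc i) (gmet E I2 k) q = pd (xc i) (pd (yc k) E) q.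
Proof.
  intros HH Hq. pose proof HH as [HU [_ [HE HC]]].
  assert (Z : pd (xc i) (fun p => yv I1 p * gmet E I1 k p + yv I2 p * gmet E I2 k p - 1 * pd (yc k) E p) q = 0).
  { apply (pd_zero_U U); auto. intros p Hp. pose proof (H1 a b s t U E k p HH Hp) as X.
    unfold sum2 in X. lra. }
  unfold gmet in *.
  rewrite pd_lin2 in Z; [| apply exd_yv | apply (exd_E2 U E); auto | apply exd_yv
     | apply (exd_E2 U E); auto | apply (exd_E1 U E); auto].
  rewrite !pd_x_yv in Z. lra.
Qed.

Lemma Hb a b s t U E l k q : Hyp a b s t U E -> U q ->
  yv I1 q * pd (yc l) (gmet E I1 k) q + yv I2 q * pd (yc l) (gmet E I2 k) q = 0.
Proof.
  intros HH Hq. pose proof HH as [HU [_ [HE HC]]].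
  assert (Z : pd (yc l) (fun p => yv I1 p * gmet E I1 k p + yv I2 p * gmet E I2 k p - 1 * pd (yc k) E p) q = 0).
  { apply (pd_zero_U U); auto. intros p Hp. pose proof (H1 a b s t U E k p HH Hp) as X.
    unfold sum2 in X. lra. }
  unfold gmet in *.
  rewrite pd_lin2 in Z; [| apply exd_yv | apply (exd_E2 U E); auto | apply exd_yv
     | apply (exd_E2 U E); auto | apply (exd_E1 U E); auto].
  destruct l.
  - rewrite pd_yv_same, (pd_yv_diff I1 I2) in Z by discriminate. lra.
  - rewrite pd_yv_same, (pd_yv_diff I2 I1) in Z by discriminate. lra.
Qed.

Lemma Hd a b s t U E m i q : Hyp a b s t U E -> U q ->
  yv I1 q * Gam2 a b s t m i I1 q + yv I2 q * Gam2 a b s t m i I2 q = Gam1 a b s t m i q.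
Proof.
  intros HH Hq. rewrite !(Gam2_val a b s t U E) by auto. rewrite (Gam1_val a b s t U E) by auto.
  unfold yv. simpl yc. simpl get.
  transitivity (-/2 * (py1 q * mono (dm Y1 (dm (yc i) (fm a b s t m))) q
                + py2 q * mono (dm Y2 (dm (yc i) (fm a b s t m))) q)); [ring|].
  rewrite mono_euler by (apply okp_dm; eapply okU; eauto).
  replace (IZR (mn (dm (yc i) (fm a b s t m))) + IZR (mk (dm (yc i) (fm a b s t m)))) with 1.
  - ring.
  - rewrite <- plus_IZR. destruct i, m; cbn [dm yc fm mn mk]; f_equal; lia.
Qed.

Lemma contract_alg y1 y2 XE A1 A2 B11 B12 B21 B22 G1a G1b G2ka G2kb
  G2j11 G2j12 G2j21 G2j22 g11 g12 g21 g22 gk1 gk2 E1 E2 :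
  A1 - (G1a*B11 + G1b*B21) - (G2ka*g11 + G2kb*g21) - (G2j11*gk1 + G2j21*gk2) = 0 ->
  A2 - (G1a*B12 + G1b*B22) - (G2ka*g12 + G2kb*g22) - (G2j12*gk1 + G2j22*gk2) = 0 ->
  y1*A1 + y2*A2 = XE ->
  y1*B11 + y2*B12 = 0 -> y1*B21 + y2*B22 = 0 ->
  y1*g11 + y2*g12 = E1 -> y1*g21 + y2*g22 = E2 ->
  y1*G2j11 + y2*G2j12 = G1a -> y1*G2j21 + y2*G2j22 = G1b ->
  XE - (G2ka*E1 + G2kb*E2) - (G1a*gk1 + G1b*gk2) = 0.
Proof.
  intros L1 L2 Ha Hb1 Hb2 Hc1 Hc2 Hd1 Hd2.
  assert (Ha' : y1*A1 + y2*A2 - XE = 0) by lra.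
  assert (Hc1' : y1*g11 + y2*g12 - E1 = 0) by lra.
  assert (Hc2' : y1*g21 + y2*g22 - E2 = 0) by lra.
  assert (Hd1' : y1*G2j11 + y2*G2j12 - G1a = 0) by lra.
  assert (Hd2' : y1*G2j21 + y2*G2j22 - G1b = 0) by lra.
  transitivity (y1 * (A1 - (G1a*B11 + G1b*B21) - (G2ka*g11 + G2kb*g21) - (G2j11*gk1 + G2j21*gk2))
    + y2 * (A2 - (G1a*B12 + G1b*B22) - (G2ka*g12 + G2kb*g22) - (G2j12*gk1 + G2j22*gk2))
    - (y1*A1 + y2*A2 - XE) + G1a * (y1*B11 + y2*B12) + G1b * (y1*B21 + y2*B22)
    + G2ka * (y1*g11 + y2*g12 - E1) + G2kb * (y1*g21 + y2*g22 - E2)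
    + gk1 * (y1*G2j11 + y2*G2j12 - G1a) + gk2 * (y1*G2j21 + y2*G2j22 - G1b)).
  - ring.
  - rewrite L1, L2, Ha', Hb1, Hb2, Hc1', Hc2', Hd1', Hd2'. ring.
Qed.

Definition Qf a b s t E i k : pt -> R := fun p =>
  pd (xc i) (pd (yc k) E) p
  - sum2 (fun l => Gam2 a b s t l i k p * pd (yc l) E p)
  - sum2 (fun l => Gam1 a b s t l i p * gmet E l k p).

Lemma Qzero a b s t U E i k q : Hyp a b s t U E -> U q -> Qf a b s t E i k q = 0.
Proof.
  intros HH Hq. pose proof HH as [HU [_ [HE HC]]].
  destruct (HC q Hq) as [_ [_ [HLs _]]].
  pose proof (HLs i I1 k) as L1. pose proof (HLs i I2 k) as L2.
  unfold Qf, sum2 in *.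
  pose proof (H1 a b s t U E I1 q HH Hq) as C1. pose proof (H1 a b s t U E I2 q HH Hq) as C2.
  unfold sum2 in C1, C2.
  rewrite (gsym a b s t U E I2 I1 q) in C1 by auto.
  rewrite (gsym a b s t U E I1 I2 q) in C2 by auto.
  eapply contract_alg; [exact L1 | exact L2 | apply (Ha a b s t U E); auto
    | apply (Hb a b s t U E); auto | apply (Hb a b s t U E); auto | exact C1 | exact C2
    | apply (Hd a b s t U E); auto | apply (Hd a b s t U E); auto].
Qed.
Lemma ix_eq (x y : ix) : {x = y} + {x <> y}. Proof. decide equality. Defined.
Lemma exd_Gam1 a b s t U E m i c q : Hyp a b s t U E -> U q -> exd c (Gam1 a b s t m i) q.
Proof.
  intros HH Hq. rewrite Gam1_fun. apply exd_scal. unfold exd.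
  apply exd_list_mono. eapply okU; eauto.
Qed.
Lemma exd_Gam2 a b s t U E m i k c q : Hyp a b s t U E -> U q -> exd c (Gam2 a b s t m i k) q.
Proof.
  intros HH Hq. rewrite Gam2_fun. apply exd_scal. unfold exd.
  apply exd_list_mono. eapply okU; eauto.
Qed.
Lemma dGam2_val a b s t U E m i k j q : Hyp a b s t U E -> U q ->
  pd (yc j) (Gam2 a b s t m i k) q = -/2 * mono (dm (yc j) (dm (yc k) (dm (yc i) (fm a b s t m)))) q.
Proof.
  intros HH Hq. rewrite Gam2_fun, pd_scal.
  change (pd (yc j) (pd_list (cons (yc k) (cons (yc i) nil)) (mono (fm a b s t m))) q)
    with (pd_list (cons (yc j) (cons (yc k) (cons (yc i) nil))) (mono (fm a b s t m)) q).
  rewrite pd_list_mono; [reflexivity|]. eapply okU; eauto.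
Qed.

Lemma pd_lin4 c X F1 G1 F2 G2 H1 K1 H2 K2 p :
  exd c X p -> exd c F1 p -> exd c G1 p -> exd c F2 p -> exd c G2 p ->
  exd c H1 p -> exd c K1 p -> exd c H2 p -> exd c K2 p ->
  pd c (fun q => X q - (F1 q * G1 q + F2 q * G2 q) - (H1 q * K1 q + H2 q * K2 q)) p =
  pd c X p - ((pd c F1 p * G1 p + F1 p * pd c G1 p) + (pd c F2 p * G2 p + F2 p * pd c G2 p))
  - ((pd c H1 p * K1 p + H1 p * pd c K1 p) + (pd c H2 p * K2 p + H2 p * pd c K2 p)).
Proof.
  intros eX e1 e2 e3 e4 e5 e6 e7 e8.
  assert (eA : exd c (fun q => F1 q * G1 q + F2 q * G2 q) p).
  { apply (exd_plus c (fun q => F1 q * G1 q) (fun q => F2 q * G2 q)); apply exd_mult; auto. }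
  assert (eB : exd c (fun q => H1 q * K1 q + H2 q * K2 q) p).
  { apply (exd_plus c (fun q => H1 q * K1 q) (fun q => H2 q * K2 q)); apply exd_mult; auto. }
  rewrite (pd_minus c (fun q => X q - (F1 q * G1 q + F2 q * G2 q)) (fun q => H1 q * K1 q + H2 q * K2 q)).
  - rewrite (pd_minus c X (fun q => F1 q * G1 q + F2 q * G2 q)); auto.
    rewrite (pd_plus c (fun q => F1 q * G1 q) (fun q => F2 q * G2 q)); try (apply exd_mult; auto).
    rewrite (pd_plus c (fun q => H1 q * K1 q) (fun q => H2 q * K2 q)); try (apply exd_mult; auto).
    rewrite (pd_mult c F1 G1), (pd_mult c F2 G2), (pd_mult c H1 K1), (pd_mult c H2 K2); auto.
  - apply (exd_minus c X (fun q => F1 q * G1 q + F2 q * G2 q)); auto.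
  - auto.
Qed.

Lemma Lands a b s t U E i j k q : Hyp a b s t U E -> U q ->
  sum2 (fun l => pd (yc j) (Gam2 a b s t l i k) q * pd (yc l) E q) = 0.
Proof.
  intros HH Hq. pose proof HH as [HU [_ [HE HC]]].
  assert (Z : pd (yc j) (Qf a b s t E i k) q = 0).
  { apply (pd_zero_U U); auto. intros p Hp. apply (Qzero a b s t U E); auto. }
  unfold Qf, sum2 in Z. unfold gmet in Z. cbv beta in Z.
  rewrite (pd_lin4 (yc j) (pd (xc i) (pd (yc k) E)) (Gam2 a b s t I1 i k) (pd (yc I1) E)
    (Gam2 a b s t I2 i k) (pd (yc I2) E) (Gam1 a b s t I1 i) (pd (yc I1) (pd (yc k) E))
    (Gam1 a b s t I2 i) (pd (yc I2) (pd (yc k) E))) in Z; [| apply (exd_E2 U E); auto | apply (exd_Gam2 a b s t U E); auto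
    | apply (exd_E1 U E); auto | apply (exd_Gam2 a b s t U E); auto | apply (exd_E1 U E); auto
    | apply (exd_Gam1 a b s t U E); auto | apply (exd_E2 U E); auto
    | apply (exd_Gam1 a b s t U E); auto | apply (exd_E2 U E); auto].
  destruct (HC q Hq) as [_ [_ [HLs _]]]. pose proof (HLs i j k) as L. unfold sum2 in L.
  change (pd (yc j) (Gam1 a b s t I1 i) q) with (Gam2 a b s t I1 i j q) in Z.
  change (pd (yc j) (Gam1 a b s t I2 i) q) with (Gam2 a b s t I2 i j q) in Z.
  assert (Sa : pd (yc j) (pd (xc i) (pd (yc k) E)) q = pd (xc i) (gmet E j k) q).
  { apply (pd_swap U E (cons (yc k) nil)); auto. destruct i, j; discriminate. }
  assert (Sb : forall l, pd (yc j) (pd (yc l) (pd (yc k) E)) q = pd (yc l) (gmet E j k) q).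
  { intros l. destruct (ix_eq l j).
    - subst. reflexivity.
    - apply (pd_swap U E (cons (yc k) nil)); auto. destruct l, j; try discriminate; now exfalso. }
  rewrite Sa, !Sb in Z.
  change (pd (yc j) (pd (yc I1) E) q) with (gmet E j I1 q) in Z.
  change (pd (yc j) (pd (yc I2) E) q) with (gmet E j I2 q) in Z.
  change (pd (yc I1) (pd (yc k) E) q) with (gmet E I1 k q) in Z.
  change (pd (yc I2) (pd (yc k) E) q) with (gmet E I2 k q) in Z.
  rewrite (gsym a b s t U E j I1 q), (gsym a b s t U E j I2 q) in Z by auto.
  unfold sum2. lra.
Qed.
Definition cm a b s t l : mon := dm Y2 (dm Y2 (dm Y2 (fm a b s t l))).

Lemma pd_lin2b c F1 G1 F2 G2 p :
  exd c F1 p -> exd c G1 p -> exd c F2 p -> exd c G2 p ->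
  pd c (fun q => F1 q * G1 q + F2 q * G2 q) p =
  (pd c F1 p * G1 p + F1 p * pd c G1 p) + (pd c F2 p * G2 p + F2 p * pd c G2 p).
Proof.
  intros e1 e2 e3 e4.
  rewrite (pd_plus c (fun q => F1 q * G1 q) (fun q => F2 q * G2 q)); try (apply exd_mult; auto).
  rewrite (pd_mult c F1 G1), (pd_mult c F2 G2); auto.
Qed.

Lemma lam0 a b s t U E q : Hyp a b s t U E -> U q ->
  mono (cm a b s t I1) q * pd (yc I1) E q + mono (cm a b s t I2) q * pd (yc I2) E q = 0.
Proof.
  intros HH Hq. pose proof (Lands a b s t U E I2 I2 I2 q HH Hq) as L. unfold sum2 in L.
  rewrite !(dGam2_val a b s t U E) in L by auto. unfold cm. simpl yc in *. lra.
Qed.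

Lemma exd_mono c x q : okp x q -> exd c (mono x) q.
Proof. intros H. apply (exd_list_mono nil). auto. Qed.

Lemma pd_mono1 c x q : okp x q -> pd c (mono x) q = mono (dm c x) q.
Proof. intros H. apply (pd_list_mono (cons c nil)). auto. Qed.

Lemma okcm a b s t U E l q : Hyp a b s t U E -> U q -> okp (cm a b s t l) q.
Proof. intros. unfold cm. repeat apply okp_dm. eapply okU; eauto. Qed.

Lemma Ly a b s t U E j q : Hyp a b s t U E -> U q ->
  mono (dm (yc j) (cm a b s t I1)) q * pd (yc I1) E q + mono (cm a b s t I1) q * gmet E j I1 q
  + (mono (dm (yc j) (cm a b s t I2)) q * pd (yc I2) E q + mono (cm a b s t I2) q * gmet E j I2 q) = 0.
Proof.
  intros HH Hq. pose proof HH as [HU [_ [HE HC]]].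
  assert (Z : pd (yc j) (fun p => mono (cm a b s t I1) p * pd (yc I1) E p
                 + mono (cm a b s t I2) p * pd (yc I2) E p) q = 0).
  { apply (pd_zero_U U); auto. intros p Hp. apply (lam0 a b s t U E); auto. }
  rewrite pd_lin2b in Z; [| apply exd_mono; eapply okcm; eauto | apply (exd_E1 U E); auto
    | apply exd_mono; eapply okcm; eauto | apply (exd_E1 U E); auto].
  rewrite !pd_mono1 in Z by (eapply okcm; eauto). unfold gmet. exact Z.
Qed.

Lemma Lx a b s t U E i q : Hyp a b s t U E -> U q ->
  mono (cm a b s t I1) q * pd (xc i) (pd (yc I1) E) q
  + mono (cm a b s t I2) q * pd (xc i) (pd (yc I2) E) q = 0.
Proof.
  intros HH Hq. pose proof HH as [HU [_ [HE HC]]].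
  assert (Z : pd (xc i) (fun p => mono (cm a b s t I1) p * pd (yc I1) E p
                 + mono (cm a b s t I2) p * pd (yc I2) E p) q = 0).
  { apply (pd_zero_U U); auto. intros p Hp. apply (lam0 a b s t U E); auto. }
  rewrite pd_lin2b in Z; [| apply exd_mono; eapply okcm; eauto | apply (exd_E1 U E); auto
    | apply exd_mono; eapply okcm; eauto | apply (exd_E1 U E); auto].
  rewrite !pd_mono1 in Z by (eapply okcm; eauto).
  assert (z : forall x, mono (dm (xc i) x) q = 0) by (intros x; destruct i; unfold mono; simpl; ring).
  rewrite !z in Z. lra.
Qed.

Lemma val_Y1 x q : py1 q <> 0 -> mono (dm Y1 x) q = IZR (mn x) * mono x q / py1 q.
Proof.
  intros H. destruct x as [al n k]. unfold mono; simpl.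
  replace (n - 1)%Z with (n + (-1))%Z by lia. rewrite powerRZ_add by auto. simpl. field. auto.
Qed.
Lemma val_Y2 x q : py2 q <> 0 -> mono (dm Y2 x) q = IZR (mk x) * mono x q / py2 q.
Proof.
  intros H. destruct x as [al n k]. unfold mono; simpl.
  replace (k - 1)%Z with (k + (-1))%Z by lia. rewrite powerRZ_add by auto. simpl. field. auto.
Qed.
Ltac rr := unfold Rdiv; ring.

Lemma K_ge3 (t : nat) (a : R) : a * INR t * (INR t - 1) * (INR t - 2) <> 0 -> 3 <= INR t.
Proof.
  intros H. destruct t as [|[|[|t]]].
  - simpl in H. lra.
  - simpl in H. lra.
  - exfalso. apply H. simpl. rr.
  - replace 3 with (INR 3) by (simpl; rr). apply le_INR. lia.
Qed.

Lemma nz3 x y z : x <> 0 -> y <> 0 -> z <> 0 -> x * y / (z * z * z) <> 0.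
Proof.
  intros. unfold Rdiv. apply Rmult_integral_contrapositive_currified.
  - apply Rmult_integral_contrapositive_currified; auto.
  - apply Rinv_neq_0_compat. repeat apply Rmult_integral_contrapositive_currified; auto.
Qed.

Lemma caseB0 c1 c2 c1u c2u E1 E2 g11 g12 g21 g22 :
  c1 <> 0 -> c2 = 0 -> c2u = 0 ->
  c1 * E1 + c2 * E2 = 0 -> c1u * E1 + c1 * g11 + (c2u * E2 + c2 * g12) = 0 ->
  (forall w1 w2, w1 <> 0 \/ w2 <> 0 -> 0 < g11*w1*w1 + g12*w1*w2 + (g21*w2*w1 + g22*w2*w2)) -> False.
Proof.
  intros Hc e2 e2u L0 Ly1 Hpos. subst c2 c2u.
  assert (E1z : E1 = 0) by (apply (Rmult_eq_reg_l c1); auto; lra).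
  subst E1. assert (g11z : g11 = 0) by (apply (Rmult_eq_reg_l c1); auto; lra).
  specialize (Hpos 1 0 (or_introl R1_neq_R0)). subst g11. lra.
Qed.

Lemma caseA0 c1 c2 c1v c2v E1 E2 g11 g12 g21 g22 :
  c2 <> 0 -> c1 = 0 -> c1v = 0 ->
  c1 * E1 + c2 * E2 = 0 -> c1v * E1 + c1 * g21 + (c2v * E2 + c2 * g22) = 0 ->
  (forall w1 w2, w1 <> 0 \/ w2 <> 0 -> 0 < g11*w1*w1 + g12*w1*w2 + (g21*w2*w1 + g22*w2*w2)) -> False.
Proof.
  intros Hc e1 e1v L0 Ly2 Hpos. subst c1 c1v.
  assert (E2z : E2 = 0) by (apply (Rmult_eq_reg_l c2); auto; lra).
  subst E2. assert (g22z : g22 = 0) by (apply (Rmult_eq_reg_l c2); auto; lra).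
  specialize (Hpos 0 1 (or_intror R1_neq_R0)). subst g22. lra.
Qed.

Lemma caseEq k1 ku kv A B E1 E2 g11 g12 g21 g22 :
  k1 <> 0 -> A <> 0 ->
  (k1*A) * E1 + (k1*B) * E2 = 0 ->
  (ku*A) * E1 + (k1*A) * g11 + ((ku*B) * E2 + (k1*B) * g12) = 0 ->
  (kv*A) * E1 + (k1*A) * g21 + ((kv*B) * E2 + (k1*B) * g22) = 0 ->
  (forall w1 w2, w1 <> 0 \/ w2 <> 0 -> 0 < g11*w1*w1 + g12*w1*w2 + (g21*w2*w1 + g22*w2*w2)) -> False.
Proof.
  intros Hk HA L0 Ly1 Ly2 Hpos.
  assert (AE : A*E1 + B*E2 = 0) by (apply (Rmult_eq_reg_l k1); auto; lra).
  assert (Ag1 : A*g11 + B*g12 = 0).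
  { apply (Rmult_eq_reg_l k1); auto. rewrite Rmult_0_r, <- Ly1.
    transitivity (k1 * (A*g11 + B*g12) + ku * (A*E1+B*E2)); [rewrite AE; ring|ring]. }
  assert (Ag2 : A*g21 + B*g22 = 0).
  { apply (Rmult_eq_reg_l k1); auto. rewrite Rmult_0_r, <- Ly2.
    transitivity (k1 * (A*g21 + B*g22) + kv * (A*E1+B*E2)); [rewrite AE; ring|ring]. }
  specialize (Hpos A B (or_introl HA)).
  replace (g11 * A * A + g12 * A * B + (g21 * B * A + g22 * B * B))
    with (A * (A*g11 + B*g12) + B * (A*g21 + B*g22)) in Hpos by ring.
  rewrite Ag1, Ag2 in Hpos. lra.
Qed.

Lemma EW_lemma c1 c2 c1u c1v c2u c2v fau fbu faa fab fba fbb E1 E2 g11 g12 g21 g22 X1 X2 :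
  c1 * X1 + c2 * X2 = 0 ->
  X1 - (-/2*faa * E1 + -/2*fba * E2) - (-/2*fau * g11 + -/2*fbu * g21) = 0 ->
  X2 - (-/2*fab * E1 + -/2*fbb * E2) - (-/2*fau * g12 + -/2*fbu * g22) = 0 ->
  c1u * E1 + c1 * g11 + (c2u * E2 + c2 * g12) = 0 ->
  c1v * E1 + c1 * g21 + (c2v * E2 + c2 * g22) = 0 ->
  g12 = g21 ->
  E1 * (c1*faa + c2*fab - fau*c1u - fbu*c1v) + E2 * (c1*fba + c2*fbb - fau*c2u - fbu*c2v) = 0.
Proof.
  intros Lx Q1 Q2 Ly1 Ly2 Hs.
  assert (e1 : X1 = -/2*faa * E1 + -/2*fba * E2 + (-/2*fau * g11 + -/2*fbu * g21)) by lra.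
  assert (e2 : X2 = -/2*fab * E1 + -/2*fbb * E2 + (-/2*fau * g12 + -/2*fbu * g22)) by lra.
  transitivity (-2 * (c1 * X1 + c2 * X2) - fau * (c1u * E1 + c1 * g11 + (c2u * E2 + c2 * g12))
                  - fbu * (c1v * E1 + c1 * g21 + (c2v * E2 + c2 * g22))).
  - rewrite e1, e2, Hs. field.
  - rewrite Lx, Ly1, Ly2. ring.
Qed.

Lemma det_lemma c1 c2 E1 E2 W1 W2 u v :
  0 < u * E1 + v * E2 -> c1 * E1 + c2 * E2 = 0 -> E1 * W1 + E2 * W2 = 0 -> c1 * W2 - c2 * W1 = 0.
Proof.
  intros Heul L0 EW.
  assert (e1 : E1 * (c1 * W2 - c2 * W1) = 0).
  { transitivity (W2 * (c1 * E1 + c2 * E2) - c2 * (E1 * W1 + E2 * W2)); [ring|].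
    rewrite L0, EW. ring. }
  assert (e2 : E2 * (c1 * W2 - c2 * W1) = 0).
  { transitivity (c1 * (E1 * W1 + E2 * W2) - W1 * (c1 * E1 + c2 * E2)); [ring|].
    rewrite L0, EW. ring. }
  destruct (Req_dec E1 0) as [z1|z1].
  - destruct (Req_dec E2 0) as [z2|z2].
    + rewrite z1, z2 in Heul. lra.
    + apply (Rmult_eq_reg_l E2); auto. rewrite e2. ring.
  - apply (Rmult_eq_reg_l E1); auto. rewrite e1. ring.
Qed.

Lemma det1_val u v a b K1 K2 P1 P2 c1 c2 c1u c1v c2u c2v f1u f2u f1uu f1uv f2uu f2uv :
  u <> 0 -> v <> 0 ->
  f1u = a*(2-K1)*P1/u -> f2u = b*(2-K2)*P2/u ->
  f1uu = a*(2-K1)*((2-K1)-1)*P1/(u*u) -> f1uv = a*(2-K1)*K1*P1/(u*v) ->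
  f2uu = b*(2-K2)*((2-K2)-1)*P2/(u*u) -> f2uv = b*(2-K2)*K2*P2/(u*v) ->
  c1 = a*K1*(K1-1)*(K1-2)*P1/(v*v*v) -> c2 = b*K2*(K2-1)*(K2-2)*P2/(v*v*v) ->
  c1u = (2-K1)*(a*K1*(K1-1)*(K1-2))*P1/(u*v*v*v) -> c1v = a*K1*(K1-1)*(K1-2)*(K1-3)*P1/(v*v*v*v) ->
  c2u = (2-K2)*(b*K2*(K2-1)*(K2-2))*P2/(u*v*v*v) -> c2v = b*K2*(K2-1)*(K2-2)*(K2-3)*P2/(v*v*v*v) ->
  c1 * (c1*f2uu + c2*f2uv - f1u*c2u - f2u*c2v) - c2 * (c1*f1uu + c2*f1uv - f1u*c1u - f2u*c1v)
  = a*b*(K1-2)*(K2-2)*(K2-K1)*(K2+K1-1)*P1*P2/(u*u*v^7)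
    * (a*K1*(K1-1)*(K1-2)*(1-K2)*P1*v + b*K2*(K2-1)*(K2-2)*K1*P2*u).
Proof. intros. subst. field. auto. Qed.

Lemma det2_val u v a b K1 K2 P1 P2 c1 c2 c1u c1v c2u c2v f1v f2v f1vu f1vv f2vu f2vv :
  u <> 0 -> v <> 0 ->
  f1v = a*K1*P1/v -> f2v = b*K2*P2/v ->
  f1vu = a*(2-K1)*K1*P1/(u*v) -> f1vv = a*K1*(K1-1)*P1/(v*v) ->
  f2vu = b*(2-K2)*K2*P2/(u*v) -> f2vv = b*K2*(K2-1)*P2/(v*v) ->
  c1 = a*K1*(K1-1)*(K1-2)*P1/(v*v*v) -> c2 = b*K2*(K2-1)*(K2-2)*P2/(v*v*v) ->
  c1u = (2-K1)*(a*K1*(K1-1)*(K1-2))*P1/(u*v*v*v) -> c1v = a*K1*(K1-1)*(K1-2)*(K1-3)*P1/(v*v*v*v) ->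
  c2u = (2-K2)*(b*K2*(K2-1)*(K2-2))*P2/(u*v*v*v) -> c2v = b*K2*(K2-1)*(K2-2)*(K2-3)*P2/(v*v*v*v) ->
  c1 * (c1*f2vu + c2*f2vv - f1v*c2u - f2v*c2v) - c2 * (c1*f1vu + c2*f1vv - f1v*c1u - f2v*c1v)
  = a*b*K1*K2*(K1-K2)*(K1+K2-3)*P1*P2/(u*v^8)
    * (a*K1*(K1-1)*(K1-2)*(2-K2)*P1*v + b*K2*(K2-1)*(K2-2)*(K1-1)*P2*u).
Proof. intros. subst. field. auto. Qed.

Lemma final2 (t s : nat) (u v a b P1 P2 E1 E2 g11 g12 g21 g22 X11 X12 X21 X22
  f1u f1v f2u f2v f1uu f1uv f1vu f1vv f2uu f2uv f2vu f2vv c1 c2 c1u c1v c2u c2v : R) :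
  u <> 0 -> v <> 0 -> P1 <> 0 -> P2 <> 0 -> (t = s -> P1 = P2) ->
  f1u = a*(2-INR t)*P1/u -> f1v = a*INR t*P1/v -> f2u = b*(2-INR s)*P2/u -> f2v = b*INR s*P2/v ->
  f1uu = a*(2-INR t)*((2-INR t)-1)*P1/(u*u) -> f1uv = a*(2-INR t)*INR t*P1/(u*v) ->
  f1vu = a*(2-INR t)*INR t*P1/(u*v) -> f1vv = a*INR t*(INR t-1)*P1/(v*v) ->
  f2uu = b*(2-INR s)*((2-INR s)-1)*P2/(u*u) -> f2uv = b*(2-INR s)*INR s*P2/(u*v) ->
  f2vu = b*(2-INR s)*INR s*P2/(u*v) -> f2vv = b*INR s*(INR s-1)*P2/(v*v) ->
  c1 = a*INR t*(INR t-1)*(INR t-2)*P1/(v*v*v) -> c2 = b*INR s*(INR s-1)*(INR s-2)*P2/(v*v*v) ->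
  c1u = (2-INR t)*(a*INR t*(INR t-1)*(INR t-2))*P1/(u*v*v*v) ->
  c1v = a*INR t*(INR t-1)*(INR t-2)*(INR t-3)*P1/(v*v*v*v) ->
  c2u = (2-INR s)*(b*INR s*(INR s-1)*(INR s-2))*P2/(u*v*v*v) ->
  c2v = b*INR s*(INR s-1)*(INR s-2)*(INR s-3)*P2/(v*v*v*v) ->
  (a*INR t*(INR t-1)*(INR t-2) <> 0 \/ b*INR s*(INR s-1)*(INR s-2) <> 0) ->
  c1 * E1 + c2 * E2 = 0 ->
  c1u * E1 + c1 * g11 + (c2u * E2 + c2 * g12) = 0 ->
  c1v * E1 + c1 * g21 + (c2v * E2 + c2 * g22) = 0 ->
  c1 * X11 + c2 * X12 = 0 -> c1 * X21 + c2 * X22 = 0 ->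
  X11 - (-/2*f1uu * E1 + -/2*f2uu * E2) - (-/2*f1u * g11 + -/2*f2u * g21) = 0 ->
  X12 - (-/2*f1uv * E1 + -/2*f2uv * E2) - (-/2*f1u * g12 + -/2*f2u * g22) = 0 ->
  X21 - (-/2*f1vu * E1 + -/2*f2vu * E2) - (-/2*f1v * g11 + -/2*f2v * g21) = 0 ->
  X22 - (-/2*f1vv * E1 + -/2*f2vv * E2) - (-/2*f1v * g12 + -/2*f2v * g22) = 0 ->
  g12 = g21 ->
  u * g11 + v * g21 = E1 -> u * g12 + v * g22 = E2 ->
  (forall w1 w2, w1 <> 0 \/ w2 <> 0 ->
     0 < g11*w1*w1 + g12*w1*w2 + (g21*w2*w1 + g22*w2*w2)) ->
  False.
Proof.
  intros Hu Hv HP1 HP2 HPst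
    ef1u ef1v ef2u ef2v ef1uu ef1uv ef1vu ef1vv ef2uu ef2uv ef2vu ef2vv ec1 ec2 ec1u ec1v ec2u ec2v
    HAB L0 Ly1 Ly2 Lx1 Lx2 Q11 Q12 Q21 Q22 Hsym H1a H1b Hpos.
  assert (Heul : 0 < u * E1 + v * E2).
  { rewrite <- H1a, <- H1b. replace (u * (u * g11 + v * g21) + v * (u * g12 + v * g22))
      with (g11*u*u + g12*u*v + (g21*v*u + g22*v*v)) by (rewrite Hsym; ring).
    apply Hpos. left; auto. }
  destruct (Req_dec (b*INR s*(INR s-1)*(INR s-2)) 0) as [HB|HB].
  { assert (HA : a*INR t*(INR t-1)*(INR t-2) <> 0) by (destruct HAB; auto; contradiction).
    apply (caseB0 c1 c2 c1u c2u E1 E2 g11 g12 g21 g22); auto.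
    - rewrite ec1. apply nz3; auto.
    - rewrite ec2, HB. rr.
    - rewrite ec2u, HB. rr. }
  destruct (Req_dec (a*INR t*(INR t-1)*(INR t-2)) 0) as [HA|HA].
  { apply (caseA0 c1 c2 c1v c2v E1 E2 g11 g12 g21 g22); auto.
    - rewrite ec2. apply nz3; auto.
    - rewrite ec1, HA. rr.
    - rewrite ec1v, HA. rr. }
  assert (t3 : 3 <= INR t) by (apply (K_ge3 t a); exact HA).
  assert (s3 : 3 <= INR s) by (apply (K_ge3 s b); exact HB).
  destruct (Nat.eq_dec t s) as [ets|nts].
  { subst s. assert (eP : P2 = P1) by (symmetry; apply HPst; auto). subst P2.
    apply (caseEq (P1/(v*v*v)) ((2-INR t)*P1/(u*v*v*v)) ((INR t-3)*P1/(v*v*v*v))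
             (a*INR t*(INR t-1)*(INR t-2)) (b*INR t*(INR t-1)*(INR t-2)) E1 E2 g11 g12 g21 g22); auto.
    - unfold Rdiv. apply Rmult_integral_contrapositive_currified; auto.
      apply Rinv_neq_0_compat. repeat apply Rmult_integral_contrapositive_currified; auto.
    - transitivity (c1 * E1 + c2 * E2); [rewrite ec1, ec2; rr | exact L0].
    - transitivity (c1u * E1 + c1 * g11 + (c2u * E2 + c2 * g12)); [rewrite ec1, ec2, ec1u, ec2u; rr | exact Ly1].
    - transitivity (c1v * E1 + c1 * g21 + (c2v * E2 + c2 * g22)); [rewrite ec1, ec2, ec1v, ec2v; rr | exact Ly2]. }
  assert (nK : INR t <> INR s) by (intros e; apply nts; apply INR_eq; exact e).
  pose proof (EW_lemma c1 c2 c1u c1v c2u c2v f1u f2u f1uu f1uv f2uu f2uv E1 E2 g11 g12 g21 g22 X11 X12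
                Lx1 Q11 Q12 Ly1 Ly2 Hsym) as EW1.
  pose proof (EW_lemma c1 c2 c1u c1v c2u c2v f1v f2v f1vu f1vv f2vu f2vv E1 E2 g11 g12 g21 g22 X21 X22
                Lx2 Q21 Q22 Ly1 Ly2 Hsym) as EW2.
  pose proof (det_lemma _ _ _ _ _ _ u v Heul L0 EW1) as D1.
  pose proof (det_lemma _ _ _ _ _ _ u v Heul L0 EW2) as D2.
  rewrite (det1_val u v a b (INR t) (INR s) P1 P2 c1 c2 c1u c1v c2u c2v f1u f2u f1uu f1uv f2uu f2uv)
    in D1 by auto.
  rewrite (det2_val u v a b (INR t) (INR s) P1 P2 c1 c2 c1u c1v c2u c2v f1v f2v f1vu f1vv f2vu f2vv)
    in D2 by auto.
  set (A := a*INR t*(INR t-1)*(INR t-2)) in *. set (B := b*INR s*(INR s-1)*(INR s-2)) in *.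
  assert (ha : a <> 0) by (intros e; apply HA; unfold A; rewrite e; rr).
  assert (hb : b <> 0) by (intros e; apply HB; unfold B; rewrite e; rr).
  apply Rmult_integral in D1. destruct D1 as [D1|lin1].
  { revert D1. unfold Rdiv. repeat apply Rmult_integral_contrapositive_currified; auto; try lra;
      try (apply Rinv_neq_0_compat; repeat apply Rmult_integral_contrapositive_currified; auto;
           apply pow_nonzero; auto). }
  apply Rmult_integral in D2. destruct D2 as [D2|lin2].
  { revert D2. unfold Rdiv. repeat apply Rmult_integral_contrapositive_currified; auto; try lra;
      try (apply Rinv_neq_0_compat; repeat apply Rmult_integral_contrapositive_currified; auto;
           apply pow_nonzero; auto). }
  assert (XYz : A*P1*v - B*P2*u = 0).
  { transitivity ((A*(2-INR s)*P1*v + B*(INR t-1)*P2*u) - (A*(1-INR s)*P1*v + B*INR t*P2*u)); [rr|].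
    rewrite lin1, lin2. rr. }
  destruct (Req_dec (INR s) (INR t + 1)) as [e21|n21].
  - assert (ec2' : c2 = c1 * v / u).
    { rewrite ec2, ec1. apply (Rmult_eq_reg_l u); auto.
      transitivity ((B*P2*u)/(v*v*v)); [unfold B; field; auto|].
      replace (B*P2*u) with (A*P1*v) by lra. unfold A. field. auto. }
    rewrite ec2' in L0.
    assert (Hc1 : c1 <> 0) by (rewrite ec1; apply nz3; auto).
    assert (uE : u * E1 + v * E2 = 0).
    { apply (Rmult_eq_reg_l (c1 / u)).
      - rewrite Rmult_0_r, <- L0. field. auto.
      - unfold Rdiv. apply Rmult_integral_contrapositive_currified; auto. apply Rinv_neq_0_compat; auto. }
    lra.
  - assert (X0 : (INR t - INR s + 1) * (A*P1*v) = 0).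
    { transitivity (A*(1-INR s)*P1*v + B*INR t*P2*u + INR t*(A*P1*v - B*P2*u)); [rr|].
      rewrite lin1, XYz. rr. }
    apply Rmult_integral in X0. destruct X0 as [X0|X0]; [lra|].
    assert (A*P1*v <> 0).
    { apply Rmult_integral_contrapositive_currified; [apply Rmult_integral_contrapositive_currified|]; auto. }
    contradiction.
Qed.
Lemma berw_nz a b s t U E l i j k p : Hyp a b s t U E -> U p ->
  berwald a b s t l i j k p <> 0 ->
  a * INR t * (INR t - 1) * (INR t - 2) <> 0 \/ b * INR s * (INR s - 1) * (INR s - 2) <> 0.
Proof.
  intros HH Hp Hb. unfold berwald in Hb. rewrite fS_mono in Hb.
  change (pd (yc i) (pd (yc j) (pd (yc k) (mono (fm a b s t l)))) p)
    with (pd_list (cons (yc i) (cons (yc j) (cons (yc k) nil))) (mono (fm a b s t l)) p) in Hb.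
  rewrite pd_list_mono in Hb by (eapply okU; eauto).
  destruct l; [left|right]; intros HA; apply Hb; clear Hb;
  destruct i, j, k; unfold mono, dml; cbn [List.fold_right dm fm yc ma mn mk];
  rewrite ?minus_IZR, <- ?INR_IZR_INZ;
  match goal with |- - / 2 * (?c * _ * _) = 0 =>
    first [ replace c with (a * INR t * (INR t - 1) * (INR t - 2)) by ring
          | replace c with (- (a * INR t * (INR t - 1) * (INR t - 2))) by ring
          | replace c with (b * INR s * (INR s - 1) * (INR s - 2)) by ring
          | replace c with (- (b * INR s * (INR s - 1) * (INR s - 2))) by ring ] end;
  rewrite ?HA; ring.
Qed.

Lemma pick_q a b s t U E p : Hyp a b s t U E -> U p ->
  exists q, U q /\ py1 q = py1 p /\ py2 q <> 0.
Proof.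
  intros [HU _] Hp. destruct (Req_dec (py2 p) 0) as [z|z].
  - destruct (HU p Hp) as [e [He H]]. exists (setc Y2 p (e/2)). split; [|split].
    + apply H. rewrite <- (setc_setc Y2 p (e/2) (e/2)). apply dist4_setc2; auto;
      simpl; rewrite z; rewrite Rminus_0_l, Rabs_Ropp, Rabs_right; lra.
    + reflexivity.
    + simpl. lra.
  - exists p. auto.
Qed.

Lemma t3_of (t : nat) (a : R) : a * INR t * (INR t - 1) * (INR t - 2) <> 0 -> (2 < t)%nat.
Proof.
  intros H. destruct t as [|[|[|t]]]; try lia; exfalso; apply H; simpl; ring.
Qed.
Ltac valtac P :=
  unfold cm; repeat ((rewrite val_Y1 by assumption) || (rewrite val_Y2 by assumption));
  cbn [mn mk ma dm fm yc]; rewrite ?minus_IZR, <- ?INR_IZR_INZ;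
  unfold mono; cbn [mn mk ma dm fm]; unfold P; field; auto.

Theorem mainTheorem15 (a b : R) (s t : nat) :
  ~ exists (U : pt -> Prop) (E : pt -> R),
      open4 U /\
      (forall p, U p -> spray_domain s t p) /\
      (exists p l i j k, U p /\ berwald a b s t l i j k p <> 0) /\
      smooth_on U E /\
      (forall p, U p ->
         condH E p /\ condEL a b s t E p /\ condLs a b s t E p /\ posdef E p).
Proof.
  intros [U [E [HU [Hd [[p0 [l [i [j [k [Hp0 Hb]]]]]] [HE HC]]]]]].
  assert (HH : Hyp a b s t U E) by exact (conj HU (conj Hd (conj HE HC))).
  pose proof (berw_nz a b s t U E l i j k p0 HH Hp0 Hb) as HAB.
  destruct (pick_q a b s t U E p0 HH Hp0) as [q [Hq [_ hv]]].
  assert (hu : py1 q <> 0).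
  { apply (Hd q Hq). destruct HAB as [H|H]; [left|right]; eapply t3_of; eauto. }
  set (P1 := powerRZ (py1 q) (2 - Z.of_nat t) * powerRZ (py2 q) (Z.of_nat t)).
  set (P2 := powerRZ (py1 q) (2 - Z.of_nat s) * powerRZ (py2 q) (Z.of_nat s)).
  destruct (HC q Hq) as [_ [_ [_ Hpos]]].
  pose proof (Qzero a b s t U E I1 I1 q HH Hq) as Q11.
  pose proof (Qzero a b s t U E I1 I2 q HH Hq) as Q12.
  pose proof (Qzero a b s t U E I2 I1 q HH Hq) as Q21.
  pose proof (Qzero a b s t U E I2 I2 q HH Hq) as Q22.
  unfold Qf, sum2 in Q11, Q12, Q21, Q22.
  rewrite !(Gam2_val a b s t U E), !(Gam1_val a b s t U E) in Q11, Q12, Q21, Q22 by auto.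
  pose proof (H1 a b s t U E I1 q HH Hq) as H1a. pose proof (H1 a b s t U E I2 q HH Hq) as H1b.
  unfold sum2, yv in H1a, H1b. cbn [get yc] in H1a, H1b.
  apply (final2 t s (py1 q) (py2 q) a b P1 P2
    (pd (yc I1) E q) (pd (yc I2) E q)
    (gmet E I1 I1 q) (gmet E I1 I2 q) (gmet E I2 I1 q) (gmet E I2 I2 q)
    (pd (xc I1) (pd (yc I1) E) q) (pd (xc I1) (pd (yc I2) E) q)
    (pd (xc I2) (pd (yc I1) E) q) (pd (xc I2) (pd (yc I2) E) q)
    (mono (dm Y1 (fm a b s t I1)) q) (mono (dm Y2 (fm a b s t I1)) q)
    (mono (dm Y1 (fm a b s t I2)) q) (mono (dm Y2 (fm a b s t I2)) q)
    (mono (dm Y1 (dm Y1 (fm a b s t I1))) q) (mono (dm Y2 (dm Y1 (fm a b s t I1))) q)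
    (mono (dm Y1 (dm Y2 (fm a b s t I1))) q) (mono (dm Y2 (dm Y2 (fm a b s t I1))) q)
    (mono (dm Y1 (dm Y1 (fm a b s t I2))) q) (mono (dm Y2 (dm Y1 (fm a b s t I2))) q)
    (mono (dm Y1 (dm Y2 (fm a b s t I2))) q) (mono (dm Y2 (dm Y2 (fm a b s t I2))) q)
    (mono (cm a b s t I1) q) (mono (cm a b s t I2) q)
    (mono (dm Y1 (cm a b s t I1)) q) (mono (dm Y2 (cm a b s t I1)) q)
    (mono (dm Y1 (cm a b s t I2)) q) (mono (dm Y2 (cm a b s t I2)) q)).
  - exact hu.
  - exact hv.
  - unfold P1. apply Rmult_integral_contrapositive_currified; apply powerRZ_NOR; auto.
  - unfold P2. apply Rmult_integral_contrapositive_currified; apply powerRZ_NOR; auto.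
  - intros e. unfold P1, P2. rewrite e. reflexivity.
  all: try (valtac P1; fail).
  all: try (valtac P2; fail).
  - exact HAB.
  - exact (lam0 a b s t U E q HH Hq).
  - exact (Ly a b s t U E I1 q HH Hq).
  - exact (Ly a b s t U E I2 q HH Hq).
  - exact (Lx a b s t U E I1 q HH Hq).
  - exact (Lx a b s t U E I2 q HH Hq).
  - exact Q11.
  - exact Q12.
  - exact Q21.
  - exact Q22.
  - exact (gsym a b s t U E I1 I2 q HH Hq).
  - exact H1a.
  - exact H1b.
  - intros w1 w2 Hw. pose proof (Hpos (fun x => match x with I1 => w1 | I2 => w2 end) Hw) as P.
    unfold sum2 in P. exact P.
Qed.
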